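(* Let $n\ge 2$ be an integer and $A\subseteq L_n$. Then: (a) $(X_n,\tau(A))$ is perfect if and only if $A$ is a $G_\delta$-set in $(L_n,\tau_E|_{L_n})$; (b) $(X_n,\tau(A))$ is Lindelöf if and only if $L_n\setminus A$ does not contain a closed uncountable subset of $(L_n,\tau_E|_{L_n})$; (c) $(X_n,\tau(A))$ is $\sigma$-compact if and only if $A$ is an $F_\sigma$-set in $(L_n,\tau_E|_{L_n})$ and $|L_n\setminus A|\le\aleph_0$.
   Context: For $\overline{x},\overline{a}\in\mathbb R^n$ let $|\overline{x}-\overline{a}|$ be the Euclidean distance and $B(\overline{a},\epsilon)=\{\overline{x}\in\mathbb R^n:|\overline{x}-\overline{a}|<\epsilon\}$. Let $P_n=\{\overline{x}\in\mathbb R^n: x_n>0\}$, $L_n=\{\overline{x}\in\mathbb R^n: x_n=0\}$, $X_n=P_n\cup L_n$, and let $\tau_E$ denote the Euclidean topology on $X_n$ (so $(L_n,\tau_E|_{L_n})\cong\mathbb R^{n-1}$). For $\overline{a}\in L_n$ and $\epsilon>0$ put $\overline{a(\epsilon)}=(a_1,\dots,a_{n-1},\epsilon)$ and $\tilde B(\overline{a},\epsilon)=\{\overline{a}\}\cup B(\overline{a(\epsilon)},\epsilon)$. For $A\subseteq L_n$, the topology $\tau(A)$ on $X_n$ is generated by the local bases: at $\overline{a}\in P_n$, the sets $B(\overline{a},\epsilon)$ with $0<\epsilon<a_n$; at $\overline{a}\in A$, the sets $B(\overline{a},\epsilon)\cap X_n$ with $\epsilon>0$; at $\overline{a}\in L_n\setminus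 A$, the sets $\tilde B(\overline{a},\epsilon)$ with $\epsilon>0$. A space is perfect if every closed set is a $G_\delta$-set. *)

(* Defs.v *)
From HB Require Import structures.
From mathcomp Require Import all_boot all_order all_algebra.
From mathcomp Require Import all_classical all_reals.
Set Implicit Arguments. Unset Strict Implicit. Unset Printing Implicit Defensive.
Import Order.TTheory GRing.Theory Num.Theory.
Local Open Scope classical_set_scope.
Local Open Scope ring_scope.

(* Points of R^n are functions 'I_n -> R; coordinate x_n is index n-1. *)
Definition edist (R : realType) (n : nat) (x y : 'I_n -> R) : R :=
  Num.sqrt (\sum_(i < n) (x i - y i) ^+ 2).

Definition eball (R : realType) (n : nat) (a : 'I_n -> R) (e : R) : set ('I_n -> R) :=
  [set x | edist x a < e].

(* last coordinate x_n (0 if n = 0, irrelevant since n >= 2) *)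
Definition lastc (R : realType) (n : nat) (x : 'I_n -> R) : R :=
  if @insub nat (fun k => (k < n)%N) 'I_n n.-1 is Some i then x i else 0.

Definition Pn (R : realType) (n : nat) : set ('I_n -> R) := [set x | 0 < lastc x].
Arguments Pn : clear implicits.
Definition Ln (R : realType) (n : nat) : set ('I_n -> R) := [set x | lastc x = 0].
Arguments Ln : clear implicits.
Definition Xn (R : realType) (n : nat) : set ('I_n -> R) := Pn R n `|` Ln R n.
Arguments Xn : clear implicits.

Definition lift_pt (R : realType) (n : nat) (a : 'I_n -> R) (e : R) : 'I_n -> R :=
  fun i => if (i : nat) == n.-1 then e else a i.

Definition tball (R : realType) (n : nat) (a : 'I_n -> R) (e : R) : set ('I_n -> R) :=
  [set a] `|` eball (lift_pt a e) e.

Definition tauA_open (R : realType) (n : nat) (A : set ('I_n -> R))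
    (U : set ('I_n -> R)) : Prop :=
  U `<=` Xn R n /\
  forall a, U a ->
    (Pn R n a -> exists e : R, 0 < e /\ e < lastc a /\ eball a e `<=` U) /\
    (A a -> exists e : R, 0 < e /\ eball a e `&` Xn R n `<=` U) /\
    (Ln R n a -> ~ A a -> exists e : R, 0 < e /\ tball a e `<=` U).

Definition eopenL (R : realType) (n : nat) (U : set ('I_n -> R)) : Prop :=
  U `<=` Ln R n /\
  forall a, U a -> exists e : R, 0 < e /\ eball a e `&` Ln R n `<=` U.

Definition t_closed (T : Type) (X : set T) (op : set T -> Prop) (F : set T) : Prop :=
  F `<=` X /\ op (X `\` F).

Definition t_Gdelta (T : Type) (op : set T -> Prop) (G : set T) : Prop :=
  exists U : nat -> set T, (forall i, op (U i)) /\ G = \bigcap_i U i.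

Definition t_Fsigma (T : Type) (X : set T) (op : set T -> Prop) (F : set T) : Prop :=
  exists C : nat -> set T, (forall i, t_closed X op (C i)) /\ F = \bigcup_i C i.

Definition t_perfect (T : Type) (X : set T) (op : set T -> Prop) : Prop :=
  forall F, t_closed X op F -> t_Gdelta op F.

Definition t_compact (T : Type) (op : set T -> Prop) (K : set T) : Prop :=
  forall (I : Type) (U : I -> set T), (forall i, op (U i)) ->
    K `<=` \bigcup_i U i ->
    exists J : set I, finite_set J /\ K `<=` \bigcup_(i in J) U i.

Definition t_lindelof (T : Type) (X : set T) (op : set T -> Prop) : Prop :=
  forall (I : Type) (U : I -> set T), (forall i, op (U i)) ->
    X `<=` \bigcup_i U i ->
    exists J : set I, countable J /\ X `<=` \bigcup_(i in J) U i.

Definition t_sigma_compact (T : Type) (X : set T) (op : set T -> Prop) : Prop :=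
  exists K : nat -> set T, (forall i, K i `<=` X /\ t_compact op (K i)) /\
    X = \bigcup_i K i.

(* Main.v *)
Require Import Defs.
From HB Require Import structures.
From mathcomp Require Import all_boot all_order all_algebra.
From mathcomp Require Import all_classical all_reals all_analysis.
From mathcomp Require Import ring lra.
Import Order.TTheory GRing.Theory Num.Theory.
Set Implicit Arguments. Unset Strict Implicit. Unset Printing Implicit Defensive.
Local Open Scope classical_set_scope.
Local Open Scope ring_scope.
Local Notation edist := Defs.edist.

Section Metric.
Variables (R : realType) (n : nat).
Implicit Types x y z : 'I_n -> R.

Lemma edist_ge0 x y : 0 <= edist x y.
Proof. exact: sqrtr_ge0. Qed.

Lemma edist_sym x y : edist x y = edist y x.
Proof.
rewrite /edist; congr Num.sqrt; apply: eq_bigr => i _.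
by rewrite -sqrrN opprB.
Qed.

Lemma edistxx x : edist x x = 0.
Proof.
rewrite /edist big1 ?sqrtr0 // => i _; by rewrite subrr expr2 mul0r.
Qed.

Lemma coord_le x y j : `|x j - y j| <= edist x y.
Proof.
rewrite /edist -sqrtr_sqr ler_sqrt; last by apply: sumr_ge0 => i _; exact: sqr_ge0.
rewrite (bigD1 j) //= lerDl; apply: sumr_ge0 => i _; exact: sqr_ge0.
Qed.

Lemma edist_le_sum x y : edist x y <= \sum_j `|x j - y j|.
Proof.
set S := \sum_j _.
have S0 : 0 <= S by apply: sumr_ge0.
rewrite /edist -[X in _ <= X]ger0_norm // -sqrtr_sqr ler_sqrt ?sqr_ge0 //.
rewrite expr2 mulr_suml; apply: ler_sum => j _.
rewrite -real_normK ?num_real // expr2 ler_wpM2l //.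
by rewrite /S (bigD1 j) //= lerDl; apply: sumr_ge0.
Qed.

Lemma cauchy_schwarz (u w : 'I_n -> R) :
  \sum_j u j * w j <= Num.sqrt (\sum_j u j ^+ 2) * Num.sqrt (\sum_j w j ^+ 2).
Proof.
set U := Num.sqrt _; set W := Num.sqrt _.
have U0 : 0 <= U by exact: sqrtr_ge0.
have W0 : 0 <= W by exact: sqrtr_ge0.
have hU : U ^+ 2 = \sum_j u j ^+ 2 by rewrite sqr_sqrtr //; apply: sumr_ge0 => j _; exact: sqr_ge0.
have hW : W ^+ 2 = \sum_j w j ^+ 2 by rewrite sqr_sqrtr //; apply: sumr_ge0 => j _; exact: sqr_ge0.
have [Ue|Un0] := eqVneq U 0.
  have u0 j : u j = 0.
    apply/eqP; rewrite -sqrf_eq0; apply/eqP.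
    by apply: (psumr_eq0P (P := predT) (fun i _ => sqr_ge0 (u i))) => //; rewrite -hU Ue expr0n.
  by rewrite Ue mul0r big1 // => j _; rewrite u0 mul0r.
have [We|Wn0] := eqVneq W 0.
  have w0 j : w j = 0.
    apply/eqP; rewrite -sqrf_eq0; apply/eqP.
    by apply: (psumr_eq0P (P := predT) (fun i _ => sqr_ge0 (w i))) => //; rewrite -hW We expr0n.
  by rewrite We mulr0 big1 // => j _; rewrite w0 mulr0.
have Up : 0 < U by rewrite lt0r Un0.
have Wp : 0 < W by rewrite lt0r Wn0.
have key : (2 * U * W) * (\sum_j u j * w j) <= (2 * U * W) * (U * W).
  rewrite mulr_sumr.
  apply: (@le_trans _ _ (\sum_j (W ^+ 2 * u j ^+ 2 + U ^+ 2 * w j ^+ 2))).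
    apply: ler_sum => j _.
    have := sqr_ge0 (W * u j - U * w j). nra.
  rewrite big_split /= -!mulr_sumr -hU -hW. nra.
have hp : 0 < 2 * U * W by rewrite !mulr_gt0.
by rewrite -(ler_pM2l hp).
Qed.

Lemma edist_triangle x y z : edist x z <= edist x y + edist y z.
Proof.
have h := cauchy_schwarz (fun j => x j - y j) (fun j => y j - z j).
rewrite /edist.
set U := Num.sqrt (\sum_j (x j - y j) ^+ 2) in h *.
set W := Num.sqrt (\sum_j (y j - z j) ^+ 2) in h *.
have U0 : 0 <= U by exact: sqrtr_ge0.
have W0 : 0 <= W by exact: sqrtr_ge0.
have hU : U ^+ 2 = \sum_j (x j - y j) ^+ 2 by rewrite sqr_sqrtr //; apply: sumr_ge0 => j _; exact: sqr_ge0.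
have hW : W ^+ 2 = \sum_j (y j - z j) ^+ 2 by rewrite sqr_sqrtr //; apply: sumr_ge0 => j _; exact: sqr_ge0.
rewrite -[X in _ <= X]ger0_norm ?addr_ge0 // -sqrtr_sqr ler_sqrt ?sqr_ge0 //.
have -> : \sum_j (x j - z j) ^+ 2 =
  \sum_j (x j - y j) ^+ 2 + 2 * \sum_j (x j - y j) * (y j - z j) + \sum_j (y j - z j) ^+ 2.
  rewrite mulr_sumr -!big_split /=; apply: eq_bigr => j _; ring.
rewrite -hU -hW. nra.
Qed.

End Metric.

Section Basic.
Variables (R : realType) (n : nat).
Hypothesis hn : (0 < n)%N.
Implicit Types (x y z a b p : 'I_n -> R) (e : R).

Lemma small_inv e : 0 < e -> exists k : nat, k.+1%:R^-1 < e.
Proof.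
move=> e0; exists (Num.Def.archi_bound e^-1).
have h : e^-1 < (Num.Def.archi_bound e^-1)%:R.
  by apply: archi_boundP; rewrite invr_ge0 ltW.
rewrite invf_plt ?posrE //; apply: (lt_le_trans h).
by rewrite ler_nat.
Qed.

Definition il : 'I_n := @Ordinal n n.-1 (eq_ind_r is_true hn (ltn_predL n)).

Lemma lastcE x : lastc x = x il.
Proof.
rewrite /lastc; case: insubP => [i _ ei|/negP []]; last by rewrite ltn_predL.
by congr x; apply: val_inj; rewrite ei.
Qed.

Lemma lift_il a e : lift_pt a e il = e.
Proof. by rewrite /lift_pt eqxx. Qed.

Lemma lift_ne a e j : j != il -> lift_pt a e j = a j.
Proof.
move=> hj; rewrite /lift_pt; case: eqP => // hj'.
by case/negP: hj; apply/eqP/val_inj.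
Qed.

Lemma lastc_lift a e : lastc (lift_pt a e) = e.
Proof. by rewrite lastcE lift_il. Qed.

Lemma Lil a : Ln R n a -> a il = 0.
Proof. by move=> La; rewrite -lastcE; exact: La. Qed.

Lemma edist_lift a e : Ln R n a -> 0 <= e -> edist (lift_pt a e) a = e.
Proof.
move=> La e0; rewrite /edist (bigD1 il) //= big1 => [|j hj].
  by rewrite addr0 lift_il Lil // subr0 sqrtr_sqr ger0_norm.
by rewrite lift_ne // subrr expr2 mul0r.
Qed.

Lemma edist_lift2 a e1 e2 : edist (lift_pt a e1) (lift_pt a e2) = `|e1 - e2|.
Proof.
rewrite /edist (bigD1 il) //= big1 => [|j hj].
  by rewrite addr0 !lift_il sqrtr_sqr.
by rewrite !lift_ne // subrr expr2 mul0r.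
Qed.

Lemma PL_false x : Pn R n x -> Ln R n x -> False.
Proof. by move=> hP hL; have : 0 < lastc x := hP; rewrite (hL : lastc x = 0) ltxx. Qed.

Lemma coord_il_le x y : `|lastc x - lastc y| <= edist x y.
Proof. by rewrite !lastcE coord_le. Qed.

Lemma lastc_bounds x y : lastc y - edist x y <= lastc x /\ lastc x <= lastc y + edist x y.
Proof.
have := coord_il_le x y; rewrite ler_norml => /andP[h1 h2]; split; lra.
Qed.

Lemma ball_P p e : e <= lastc p -> eball p e `<=` Pn R n.
Proof.
move=> hle y hy; have hy' : edist y p < e := hy.
have [h1 _] := lastc_bounds y p; change (0 < lastc y); lra.
Qed.

Lemma liftball_P a e : eball (lift_pt a e) e `<=` Pn R n.
Proof.
move=> y hy; have hy' : edist y (lift_pt a e) < e := hy.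
have [h1 _] := lastc_bounds y (lift_pt a e).
rewrite lastc_lift in h1; change (0 < lastc y); lra.
Qed.

Lemma tball_X a e : Ln R n a -> tball a e `<=` Xn R n.
Proof.
move=> La y [->|hy]; first by right.
by left; apply: liftball_P hy.
Qed.

Lemma tball_sub a e : Ln R n a -> 0 < e -> tball a e `<=` eball a (e + e).
Proof.
move=> La e0 y [->|hy]; first by change (edist a a < e + e); rewrite edistxx addr_gt0.
change (edist y a < e + e).
apply: (le_lt_trans (edist_triangle _ (lift_pt a e) _)).
rewrite edist_lift ?ltW //; have hy' : edist y (lift_pt a e) < e := hy; lra.
Qed.

Lemma tball_mono a e1 e2 : 0 <= e1 -> e1 <= e2 -> tball a e1 `<=` tball a e2.
Proof.
move=> e10 e12 y [->|hy]; first by left.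
right; change (edist y (lift_pt a e2) < e2); apply: (le_lt_trans (edist_triangle _ (lift_pt a e1) _)).
rewrite edist_lift2 ler0_norm ?subr_le0 //; have hy' : edist y (lift_pt a e1) < e1 := hy; lra.
Qed.

End Basic.

Lemma min_facts (R : realType) (e1 e2 : R) :
  Num.min e1 e2 <= e1 /\ Num.min e1 e2 <= e2 /\ (0 < e1 -> 0 < e2 -> 0 < Num.min e1 e2).
Proof.
split; first by rewrite ge_min lexx.
split; first by rewrite ge_min lexx orbT.
by move=> h1 h2; rewrite lt_min h1 h2.
Qed.

Section Top.
Variables (R : realType) (n : nat).
Hypothesis hn : (0 < n)%N.
Variable A : set ('I_n -> R).
Hypothesis hA : A `<=` Ln R n.
Implicit Types (x y z a b p : 'I_n -> R) (e : R) (U V S : set ('I_n -> R)).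

Local Notation X := (Xn R n).
Local Notation P := (Pn R n).
Local Notation L := (Ln R n).
Local Notation op := (tauA_open A).

Definition eop U := U `<=` X /\
  forall x, U x -> exists e, 0 < e /\ forall y, X y -> edist y x < e -> U y.

Lemma lastc_pos x : P x -> 0 < lastc x.
Proof. by []. Qed.

Lemma P_nbhd x : P x -> exists e, 0 < e /\ e < lastc x /\ eball x e `<=` P.
Proof.
move=> Px; have h := lastc_pos Px.
exists (lastc x / 2); split; first by rewrite divr_gt0.
split; first by rewrite ltr_pdivrMr // ltr_pMr // ltr1n.
by apply: (ball_P hn); rewrite ler_pdivrMr // ler_pMr // ler1n.
Qed.

Lemma eop_open U : eop U -> op U.
Proof.
move=> [UX hU]; split => // x Ux.
have [e [e0 he]] := hU x Ux.
split; [|split].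
- move=> Px; have [e' [e'0 [e'l e'P]]] := P_nbhd Px.
  have [m1 [m2 m0]] := min_facts e e'.
  exists (Num.min e e'); split; first exact: m0.
  split; first by apply: le_lt_trans e'l.
  move=> y hy; have hy' : edist y x < Num.min e e' := hy.
  apply: he; last by apply: lt_le_trans m1.
  left; apply: e'P; rewrite /eball /=; exact: lt_le_trans m2.
- move=> Ax; exists e; split => // y [hy Xy]; exact: he.
- move=> Lx _; exists (e / 2); split; first by rewrite divr_gt0.
  move=> y hy; apply: he; first exact: (tball_X hn Lx hy).
  have e20 : 0 < e / 2 by apply: divr_gt0.
  have := tball_sub hn Lx e20 hy.
  by rewrite -splitr.
Qed.

Lemma opI U V : op U -> op V -> op (U `&` V).
Proof.
move=> [UX hU] [VX hV]; split; first by move=> x [/UX].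
move=> x [Ux Vx]; have [hU1 [hU2 hU3]] := hU x Ux; have [hV1 [hV2 hV3]] := hV x Vx.
split; [|split].
- move=> Px; have [e1 [e10 [e1l e1U]]] := hU1 Px; have [e2 [e20 [e2l e2V]]] := hV1 Px.
  have [m1 [m2 m0]] := min_facts e1 e2.
  exists (Num.min e1 e2); split; first exact: m0.
  split; first by apply: le_lt_trans e1l.
  move=> y hy; have hy' : edist y x < Num.min e1 e2 := hy.
  split; [apply: e1U | apply: e2V].
    exact: (lt_le_trans hy' m1).
  exact: (lt_le_trans hy' m2).
- move=> Ax; have [e1 [e10 e1U]] := hU2 Ax; have [e2 [e20 e2V]] := hV2 Ax.
  have [m1 [m2 m0]] := min_facts e1 e2.
  exists (Num.min e1 e2); split; first exact: m0.
  move=> y [hy Xy]; have hy' : edist y x < Num.min e1 e2 := hy.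
  split; [apply: e1U | apply: e2V]; (split; last exact: Xy).
    exact: (lt_le_trans hy' m1).
  exact: (lt_le_trans hy' m2).
- move=> Lx nAx; have [e1 [e10 e1U]] := hU3 Lx nAx; have [e2 [e20 e2V]] := hV3 Lx nAx.
  have [m1 [m2 m0]] := min_facts e1 e2.
  exists (Num.min e1 e2); split; first exact: m0.
  have m0' := ltW (m0 e10 e20).
  move=> y hy; split; [apply: e1U | apply: e2V]; exact: (tball_mono hn _ _ hy).
Qed.

Lemma opU U V : op U -> op V -> op (U `|` V).
Proof.
move=> [UX hU] [VX hV]; split; first by move=> x [/UX|/VX].
move=> x [Ux|Vx].
- have [h1 [h2 h3]] := hU x Ux; split; [|split].
  + by move=> Px; have [e [? [? he]]] := h1 Px; exists e; split => //; split => // y /he; left.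
  + by move=> Ax; have [e [? he]] := h2 Ax; exists e; split => // y /he; left.
  + by move=> Lx nAx; have [e [? he]] := h3 Lx nAx; exists e; split => // y /he; left.
- have [h1 [h2 h3]] := hV x Vx; split; [|split].
  + by move=> Px; have [e [? [? he]]] := h1 Px; exists e; split => //; split => // y /he; right.
  + by move=> Ax; have [e [? he]] := h2 Ax; exists e; split => // y /he; right.
  + by move=> Lx nAx; have [e [? he]] := h3 Lx nAx; exists e; split => // y /he; right.
Qed.

Lemma op0 : op set0.
Proof. by split. Qed.

Lemma op_nbhs U x : op U -> U x -> P x \/ A x ->
  exists e, 0 < e /\ forall y, X y -> edist y x < e -> U y.
Proof.
move=> [UX hU] Ux hx; have [h1 [h2 _]] := hU x Ux.
case: hx => [Px|Ax].
- have [e [e0 [_ he]]] := h1 Px; exists e; split => // y _ hy; exact: he.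
- have [e [e0 he]] := h2 Ax; exists e; split => // y Xy hy; exact: he.
Qed.

Lemma PUb_open b : L b -> ~ A b -> op (P `|` [set b]).
Proof.
move=> Lb nAb; split; first by move=> x [Px|->]; [left|right].
move=> x hx; split; [|split].
- move=> Px; have [e [e0 [el eP]]] := P_nbhd Px.
  by exists e; split => //; split => // y /eP; left.
- move=> Ax; exfalso; case: hx => [Px|xb]; first exact: (PL_false Px (hA Ax)).
  by apply: nAb; rewrite -xb.
- move=> Lx nAx; exists 1; split => //.
  case: hx => [Px|->]; first by case: (PL_false Px Lx).
  by move=> y [->|hy]; [right|left; exact: (liftball_P hn hy)].
Qed.

Lemma Lclosed_sub S : S `<=` L ->
  (forall a, A a -> exists e, 0 < e /\ forall y, L y -> edist y a < e -> ~ S y) ->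
  t_closed X op S.
Proof.
move=> SL hS; split; first by move=> x /SL; right.
split; first by move=> x [].
move=> x [Xx nSx]; split; [|split].
- move=> Px; have [e [e0 [el eP]]] := P_nbhd Px.
  exists e; split => //; split => // y /eP Py; split; first by left.
  by move=> /SL Ly; apply: (PL_false Py Ly).
- move=> Ax; have [e [e0 he]] := hS x Ax; exists e; split => //.
  move=> y [hy Xy]; split => // Sy; exact: (he y (SL y Sy) hy Sy).
- move=> Lx nAx; exists 1; split => //.
  move=> y [->|hy]; first by split.
  have Py := liftball_P hn hy; split; first by left.
  by move=> /SL Ly; apply: (PL_false Py Ly).
Qed.

Lemma A_closed : t_closed X op A.
Proof.
split; first by move=> x /hA; right.
split; first by move=> x [].
move=> x [Xx nAx]; split; [|split].
- move=> Px; have [e [e0 [el eP]]] := P_nbhd Px.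
  exists e; split => //; split => // y /eP Py; split; first by left.
  by move=> /hA Ly; apply: (PL_false Py Ly).
- by move=> Ax.
- move=> Lx _; exists 1; split => //.
  move=> y [->|hy]; first by split.
  have Py := liftball_P hn hy; split; first by left.
  by move=> /hA Ly; apply: (PL_false Py Ly).
Qed.

Lemma closedU C1 C2 : t_closed X op C1 -> t_closed X op C2 -> t_closed X op (C1 `|` C2).
Proof.
move=> [C1X o1] [C2X o2]; split; first by move=> x [/C1X|/C2X].
by rewrite setDUr; apply: opI.
Qed.

End Top.

Section PartA.
Variables (R : realType) (n : nat).
Hypothesis hn : (0 < n)%N.
Variable A : set ('I_n -> R).
Hypothesis hA : A `<=` Ln R n.
Implicit Types (x y z a b p : 'I_n -> R) (e : R) (U V S : set ('I_n -> R)).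

Local Notation X := (Xn R n).
Local Notation P := (Pn R n).
Local Notation L := (Ln R n).
Local Notation op := (tauA_open A).

Lemma partA_fwd : t_perfect X op -> t_Gdelta (@eopenL R n) A.
Proof.
move=> hperf; have [U [Uo AU]] := hperf A (A_closed hn hA).
exists (fun i => [set a | L a /\ exists e, 0 < e /\ forall y, L y -> edist y a < e -> U i y]).
split.
- move=> i; split; first by move=> a [].
  move=> a [La [e [e0 he]]]; exists e; split => //.
  move=> y [hy Ly]; have hy' : edist y a < e := hy.
  split => //; exists (e - edist y a); split; first by rewrite subr_gt0.
  move=> z Lz hz; apply: he Lz _.
  have := edist_triangle z y a; lra.
- apply/seteqP; split.
  + move=> a Aa i _; split; first exact: hA.
    have Uia : U i a by rewrite AU in Aa; exact: Aa.
    have [_ [h2 _]] := (Uo i).2 a Uia.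
    have [e [e0 he]] := h2 Aa; exists e; split => // y Ly hy.
    by apply: he; split => //; right.
  + move=> a ha; rewrite AU => i _.
    have [La [e [e0 he]]] := ha i I.
    by apply: he La _; rewrite edistxx.
Qed.

Lemma partA_bwd : t_Gdelta (@eopenL R n) A -> t_perfect X op.
Proof.
move=> [Os [Oo AO]] F [FX Gop].
set G := X `\` F.
pose K (j : nat) := [set x | X x /\ forall y, X y -> edist y x < j.+1%:R^-1 -> G y].
pose E (j : nat) := [set x | G x /\ L x /\ ~ Os j x].
have Kc j : t_closed X op (K j).
  split; first by move=> x [].
  apply: (eop_open hn); split; first by move=> x [].
  move=> x [Xx nKx].
  have [y [Xy [hy nG]]] : exists y, X y /\ edist y x < j.+1%:R^-1 /\ ~ G y.
    apply: contrapT => hno; apply: nKx; split => // y Xy hy.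
    apply: contrapT => nG; apply: hno; by exists y.
  exists (j.+1%:R^-1 - edist y x); split; first by rewrite subr_gt0.
  move=> z Xz hz; split => // -[_ hK]; apply: nG; apply: hK => //.
  have := edist_triangle y x z; rewrite (edist_sym x z).
  set r := j.+1%:R^-1 in hy hz *; lra.
have Ec j : t_closed X op (E j).
  apply: (Lclosed_sub hn); first by move=> x [_ []].
  move=> a Aa; have Oja : Os j a by rewrite AO in Aa; exact: Aa.
  have [_ hO] := Oo j; have [e [e0 he]] := hO a Oja.
  exists e; split => // y Ly hy [_ [_ nO]]; apply: nO; apply: he; split => //.
exists (fun j => X `\` (K j `|` E j)); split.
  by move=> j; have [_ ?] := closedU hn (Kc j) (Ec j).
apply/seteqP; split.
- move=> x Fx j _; split; first exact: FX.
  have nG : ~ G x by move=> [].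
  case=> [[Xx hK]|[hG _]]; last exact: nG.
  by apply: nG; apply: hK Xx _; rewrite edistxx.
- move=> x hx; have [Xx _] := hx 0%N I.
  apply: contrapT => nFx; have Gx : G x by [].
  have [PAx|[Lx nAx]] : (P x \/ A x) \/ (L x /\ ~ A x).
    case: Xx => [Px|Lx]; first by left; left.
    by case: (pselect (A x)) => [Ax|nAx]; [left; right|right].
  + have [e [e0 he]] := op_nbhs Gop Gx PAx.
    have [k hk] := small_inv e0.
    have [_ hk'] := hx k I; apply: hk'; left; split => // y Xy hy.
    by apply: he Xy _; set r := k.+1%:R^-1 in hk hy; lra.
  + have [j nOj] : exists j, ~ Os j x.
      apply: contrapT => hno; apply: nAx; rewrite AO => j _.
      apply: contrapT => nO; apply: hno; by exists j.
    have [_ hk'] := hx j I; apply: hk'; right; split => //.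
Qed.

End PartA.

Lemma countableU2 T (B C : set T) : countable B -> countable C -> countable (B `|` C).
Proof.
move=> cB cC.
have -> : B `|` C = \bigcup_(b in [set: bool]) (if b then B else C).
  apply/seteqP; split => x.
  - by case=> hx; [exists true | exists false].
  - by case=> -[] _ hx; [left|right].
apply: bigcup_countable => //; by case.
Qed.

Section Grid.
Variables (R : realType) (n : nat).
Hypothesis hn : (0 < n)%N.

Definition Qt := ({ffun 'I_n -> int} * nat)%type.
Definition gc (q : Qt) : 'I_n -> R := fun j => (q.1 j)%:~R / ((q.2.+1 * n.+1)%N%:R).
Definition gr (q : Qt) : R := q.2.+1%:R^-1.

Lemma gr_gt0 q : 0 < gr q.
Proof. by rewrite /gr invr_gt0 ltr0n. Qed.

Lemma grid (x : 'I_n -> R) (e : R) : 0 < e -> exists q : Qt,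
  edist x (gc q) < gr q /\ forall y, edist y (gc q) < gr q -> edist y x < e.
Proof.
move=> e0; have e20 : 0 < e / 2 by apply: divr_gt0.
have [k hk] := small_inv e20.
set m : R := (k.+1 * n.+1)%N%:R.
have m0 : 0 < m by rewrite /m ltr0n muln_gt0.
exists ([ffun j => Num.floor (x j * m)], k).
have h1 : edist x (gc ([ffun j => Num.floor (x j * m)], k)) < gr ([ffun j => Num.floor (x j * m)], k).
  apply: (le_lt_trans (edist_le_sum _ _)).
  apply: (@le_lt_trans _ _ (\sum_(j < n) m^-1)).
    apply: ler_sum => j _; rewrite /gc /= ffunE -/m.
    set t := x j * m; set fl : R := (Num.floor t)%:~R.
    have hf1 : fl <= t by apply: floor_le.
    have hf2 : t < fl + 1.
      by have := floorD1_gt t; rewrite intrD => h; exact: h.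
    have -> : x j - fl / m = (t - fl) / m.
      by rewrite /t mulrBl mulfK // gt_eqF.
    rewrite normrM normfV (gtr0_norm m0) -[X in _ <= X]mul1r ler_wpM2r //.
      by rewrite invr_ge0 ltW.
    by rewrite ger0_norm; lra.
  rewrite sumr_const card_ord -mulr_natl /gr /m natrM invfM mulrA /= mulrAC.
  rewrite -[X in _ < X]mul1r ltr_pM2r ?invr_gt0 ?ltr0n //.
  by rewrite ltr_pdivrMr ?ltr0n // mul1r ltr_nat.
split => // y hy.
apply: (le_lt_trans (edist_triangle y (gc ([ffun j => Num.floor (x j * m)], k)) x)).
rewrite (edist_sym _ x).
have -> : e = e / 2 + e / 2 by rewrite -splitr.
rewrite /gr /= in h1 hy hk *.
set r := k.+1%:R^-1 in h1 hy hk *.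
lra.
Qed.

End Grid.

Section PartB.
Variables (R : realType) (n : nat).
Hypothesis hn : (0 < n)%N.
Variable A : set ('I_n -> R).
Hypothesis hA : A `<=` Ln R n.
Implicit Types (x y z a b p : 'I_n -> R) (e : R) (U V S : set ('I_n -> R)).

Local Notation X := (Xn R n).
Local Notation P := (Pn R n).
Local Notation L := (Ln R n).
Local Notation op := (tauA_open A).

Lemma zero_L : L (fun _ => 0).
Proof. by rewrite /Ln /= lastcE. Qed.

Lemma closedL_tau F : F `<=` L `\` A -> t_closed L (@eopenL R n) F -> t_closed X op F.
Proof.
move=> FLA [_ [_ hF]]; apply: (Lclosed_sub hn); first by move=> x /FLA [].
move=> a Aa.
have [e [e0 he]] := hF a (conj (hA Aa) (fun Fa => (FLA a Fa).2 Aa)).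
exists e; split => // y Ly hy Fy.
by have [_ ] := he y (conj hy Ly).
Qed.

Lemma partB_fwd : t_lindelof X op ->
  ~ exists F, F `<=` L `\` A /\ t_closed L (@eopenL R n) F /\ ~ countable F.
Proof.
move=> hL [F [FLA [Fc nF]]].
have FC := closedL_tau FLA Fc.
have [FX Gop] := FC.
pose U b := (X `\` F) `|` [set x | x = b /\ F x].
have Uo b : op (U b).
  case: (pselect (F b)) => [Fb|nFb].
    have [Lb nAb] := FLA b Fb.
    have -> : U b = (X `\` F) `|` (P `|` [set b]).
      apply/seteqP; split => x.
      - by case=> [h|[-> _]]; [left|right; right].
      - case=> [h|[Px|->]]; [by left| |by right].
        left; split; first by left.
        by move=> /FLA [Lx _]; apply: (PL_false Px Lx).
    by apply: (opU Gop); apply: (PUb_open hn hA).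
  have -> : U b = X `\` F.
    apply/seteqP; split => x; last by left.
    by case=> // -[-> Fb].
  exact: Gop.
have cover : X `<=` \bigcup_b U b.
  move=> x Xx; exists x => //.
  by case: (pselect (F x)) => [Fx|nFx]; [right|left].
have [J [Jc JX]] := hL _ U Uo cover.
apply: nF; apply: (sub_countable _ Jc); apply: subset_card_le => x Fx.
have [b Jb [[_ nFx]|[-> _]]] := JX x (FX x Fx) => //.
Qed.

Lemma partB_bwd :
  ~ (exists F, F `<=` L `\` A /\ t_closed L (@eopenL R n) F /\ ~ countable F) ->
  t_lindelof X op.
Proof.
move=> hno I U Uo cover.
have [i0 _ _] := cover _ (or_intror zero_L).
pose good (q : Qt n) i := eball (gc R q) (gr R q) `&` X `<=` U i.
have [g hg] : {g : Qt n -> I & forall q, (exists i, good q i) -> good q (g q)}.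
  apply: (@choice _ _ (fun q i => (exists i, good q i) -> good q i)) => q; case: (pselect (exists i, good q i)) => [[i hi]|nq].
    by exists i.
  by exists i0.
have [h hh] : {h : ('I_n -> R) -> I & forall x, X x -> U (h x) x}.
  apply: (@choice _ _ (fun x i => X x -> U i x)) => x; case: (pselect (X x)) => [Xx|nX]; last by exists i0.
  by have [i _ hi] := cover x Xx; exists i.
pose F := [set x | X x /\ ~ exists q, (exists i, good q i) /\ eball (gc R q) (gr R q) x].
have FLA : F `<=` L `\` A.
  move=> x [Xx nq].
  have nPA : ~ (P x \/ A x).
    move=> PAx; have [i _ Uix] := cover x Xx.
    have [e [e0 he]] := op_nbhs (Uo i) Uix PAx.
    have [q [hq1 hq2]] := grid x e0.
    apply: nq; exists q; split; last exact: hq1.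
    exists i => y [hy Xy]; apply: he Xy _; exact: hq2.
  case: Xx => [Px|Lx]; first by case: nPA; left.
  by split => // Ax; apply: nPA; right.
have Fc : t_closed L (@eopenL R n) F.
  split; first by move=> x /FLA [].
  split; first by move=> x [].
  move=> a [La nFa].
  have [q [[i gi] hq]] : exists q, (exists i, good q i) /\ eball (gc R q) (gr R q) a.
    apply: contrapT => nq; apply: nFa; split; first by right.
    exact: nq.
  have hq' : edist a (gc R q) < gr R q := hq.
  exists (gr R q - edist a (gc R q)); split; first by rewrite subr_gt0.
  move=> y [hy Ly]; have hy' : edist y a < gr R q - edist a (gc R q) := hy.
  split => //; move=> [_ nq]; apply: nq; exists q; split; first by exists i.
  change (edist y (gc R q) < gr R q).
  have := edist_triangle y a (gc R q); lra.
have Fcount : countable F.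
  by apply: contrapT => nc; apply: hno; exists F.
exists (range g `|` h @` F); split.
  apply: countableU2.
    by apply: (sub_countable (card_image_le _ _)); exact: countableP.
  exact: (sub_countable (card_image_le _ _) Fcount).
move=> x Xx; case: (pselect (F x)) => [Fx|nFx].
  by exists (h x); [right; exists x | apply: hh].
have [q [gq hq]] : exists q, (exists i, good q i) /\ eball (gc R q) (gr R q) x.
  apply: contrapT => nq; apply: nFx; split => //.
exists (g q); first by left; exists q.
by apply: (hg q gq); split.
Qed.

End PartB.

Lemma edist_eq0 (R : realType) (n : nat) (x y : 'I_n -> R) : edist x y = 0 -> x = y.
Proof.
move=> h; apply/funext => j; apply/eqP; rewrite -subr_eq0 -sqrf_eq0; apply/eqP.
have S0 : 0 <= \sum_(i < n) (x i - y i) ^+ 2 by apply: sumr_ge0 => i _; exact: sqr_ge0.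
have : \sum_(i < n) (x i - y i) ^+ 2 = 0.
  apply/eqP; rewrite eq_le S0 andbT -sqrtr_eq0; apply/eqP; exact: h.
by move/(psumr_eq0P (P := predT) (fun i _ => sqr_ge0 (x i - y i))); apply.
Qed.

Lemma fin_nat_bound (J : set nat) : finite_set J -> exists N, forall k, J k -> (k <= N)%N.
Proof.
move=> /finite_fsetP [Xf ->]; exists (\max_(k <- finmap.enum_fset Xf) k)%N => k kX.
by apply: leq_bigmax_seq => //; exact: kX.
Qed.

Lemma inv_nat_le (R : realType) (k N : nat) : (k <= N)%N -> N.+1%:R^-1 <= k.+1%:R^-1 :> R.
Proof. by move=> h; rewrite lef_pV2 ?posrE ?ltr0n // ler_nat ltnS. Qed.

Section Compact.
Variables (R : realType) (n : nat).
Hypothesis hn : (0 < n)%N.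
Variable A : set ('I_n -> R).
Hypothesis hA : A `<=` Ln R n.
Implicit Types (x y z a b p : 'I_n -> R) (e : R) (U V S K : set ('I_n -> R)).

Local Notation X := (Xn R n).
Local Notation P := (Pn R n).
Local Notation L := (Ln R n).
Local Notation op := (tauA_open A).

Lemma compact_near K T a : K `<=` X -> t_compact op K -> op T -> (K a -> T a) ->
  exists e, 0 < e /\ forall x, K x -> edist x a < e -> T x.
Proof.
move=> KX cK To KTa.
pose V (k : nat) := match k with 0%N => T | k'.+1 => [set x | X x /\ k'.+1%:R^-1 < edist x a] end.
have Vo k : op (V k).
  case: k => [|k] //=; apply: (eop_open hn); split; first by move=> x [].
  move=> x [Xx hx]; exists (edist x a - k.+1%:R^-1); split; first by rewrite subr_gt0.
  move=> y Xy hy; split => //.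
  have := edist_triangle x y a; rewrite (edist_sym x y).
  set r := k.+1%:R^-1 in hx hy *; lra.
have cov : K `<=` \bigcup_k V k.
  move=> x Kx; case: (pselect (x = a)) => [xa|xna].
    by exists 0%N => //=; rewrite xa; apply: KTa; rewrite -xa.
  have dpos : 0 < edist x a.
    rewrite lt_neqAle edist_ge0 andbT eq_sym; apply/eqP => h; exact: xna (edist_eq0 h).
  have [k hk] := small_inv dpos.
  by exists k.+1 => //=; split => //; apply: KX.
have [J [fJ KJ]] := cK _ V Vo cov.
have [N hN] := fin_nat_bound fJ.
exists N.+1%:R^-1; split; first by rewrite invr_gt0 ltr0n.
move=> x Kx hx; have [[|k] Jk hk] := KJ x Kx; first exact: hk.
exfalso; have [_ hk'] := hk.
have := inv_nat_le R (ltnW (hN _ Jk)).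
set r1 := k.+1%:R^-1 in hk' *; set r2 := N.+1%:R^-1 in hx *.
lra.
Qed.

End Compact.

Module TransferM.
From mathcomp Require Import finmap.

Import numFieldNormedType.Exports.
Section Transfer.
Variables (R : realType) (n : nat).

Definition tof (v : 'rV[R]_n) : 'I_n -> R := fun j => v ord0 j.

Lemma rV_ball_coord (v w : 'rV[R]_n) (d : R) : ball v d w -> 0 < d /\ forall j, `|v ord0 j - w ord0 j| < d.
Proof. by move=> [d0 h]; split => // j; have := h ord0 j. Qed.

Lemma edist_rV (v w : 'rV[R]_n) (d : R) : ball v d w -> edist (tof w) (tof v) < n.+1%:R * d.
Proof.
move=> /rV_ball_coord [d0 h].
apply: (le_lt_trans (edist_le_sum _ _)).
apply: (@le_lt_trans _ _ (\sum_(j < n) d)).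
  by apply: ler_sum => j _; rewrite /tof distrC; apply: ltW.
rewrite sumr_const card_ord -mulr_natl.
have hnn : (n%:R : R) < n.+1%:R by rewrite ltr_nat.
nra.
Qed.

Lemma tof_row (x : 'I_n -> R) : tof (\row_j x j) = x.
Proof. by apply/funext => j; rewrite /tof mxE. Qed.

End Transfer.

Section Transfer2.
Variables (R : realType) (n : nat).
Hypothesis hn : (0 < n)%N.
Variable A : set ('I_n -> R).
Hypothesis hA : A `<=` Ln R n.
Implicit Types (x y z a b p : 'I_n -> R) (e : R) (U V S K : set ('I_n -> R)).

Local Notation X := (Xn R n).
Local Notation P := (Pn R n).
Local Notation L := (Ln R n).
Local Notation op := (tauA_open A).

Definition eclosed S := forall x, ~ S x -> exists e, 0 < e /\ forall y, edist y x < e -> ~ S y.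

Lemma compact_transfer S (m : R) : S `<=` X -> (forall x, S x -> P x \/ A x) -> eclosed S ->
  (forall x, S x -> forall j, `|x j| <= m) -> t_compact op S.
Proof.
move=> SX SPA Sc Sb I U Uo cover.
case: (pselect (exists x, S x)) => [[x0 Sx0]|nS]; last first.
  exists set0; split; first exact: finite_set0.
  by move=> x Sx; case: nS; exists x.
have [i0 _ _] := cover x0 Sx0.
pose S' := [set v : 'rV[R]_n | S (tof v)].
have [dg hdg] : {dg : 'rV[R]_n -> R * I & forall v, S' v -> 0 < (dg v).1 /\
    forall y, X y -> edist y (tof v) < n.+1%:R * (dg v).1 -> U (dg v).2 y}.
  apply: (@choice _ _ (fun (v : 'rV[R]_n) (p : R * I) => S' v -> 0 < p.1 /\ forall y, X y -> edist y (tof v) < n.+1%:R * p.1 -> U p.2 y)) => v.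
  case: (pselect (S' v)) => [Sv|nSv]; last by exists (1, i0).
  have [i _ Ui] := cover _ Sv.
  have [e [e0 he]] := op_nbhs (Uo i) Ui (SPA _ Sv).
  exists (e / n.+1%:R, i) => _ /=; split; first by rewrite divr_gt0 // ltr0n.
  move=> y Xy hy; apply: he Xy _; by rewrite mulrC divfK ?pnatr_eq0 in hy.
have cS' : compact S'.
  have cB : compact [set v : 'rV[R]_n | forall i, `[-m, m]%classic (v ord0 i)].
    exact: (rV_compact (fun _ => @segment_compact R (-m) m)).
  have Sc' : closed S'.
    rewrite closedE => v hv; apply: contrapT => nSv; apply: hv.
    have [e [e0 he]] := Sc _ nSv.
    apply/nbhs_ballP; exists (e / n.+1%:R); first by apply: divr_gt0; rewrite ?ltr0n.
    move=> w hw; apply: he; have := edist_rV hw; by rewrite mulrC divfK ?pnatr_eq0.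
  have Sb' : S' `<=` [set v : 'rV[R]_n | forall i, `[-m, m]%classic (v ord0 i)].
    move=> v Sv i; rewrite /= in_itv /= -ler_norml; exact: Sb _ Sv i.
  exact: (subclosed_compact Sc' cB Sb').
have hcc := cS'; rewrite compact_cover in hcc.
have hcov : S' `<=` \bigcup_(v in S') ball v (dg v).1.
  by move=> v Sv; exists v => //; apply: ballxx; exact: (hdg v Sv).1.
have [D' sD' cD'] := hcc _ S' (fun v => ball v (dg v).1) (fun v _ => ball_open v _) hcov.
exists ((fun v => (dg v).2) @` [set` D']); split.
  by apply: finite_image; exact: finite_fset.
move=> x Sx.
have Sv : S' (\row_j x j) by rewrite /S' /= tof_row.
have [w Dw hw] := cD' _ Sv.
have /set_mem Sw := sD' w Dw.
exists (dg w).2; first by exists w.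
have [_ h] := hdg w Sw; apply: h; first exact: SX.
by have := edist_rV hw; rewrite tof_row.
Qed.

End Transfer2.
End TransferM.
Import TransferM.

Section PartC.
Variables (R : realType) (n : nat).
Hypothesis hn : (0 < n)%N.
Variable A : set ('I_n -> R).
Hypothesis hA : A `<=` Ln R n.
Implicit Types (x y z a b p : 'I_n -> R) (e : R) (U V S K : set ('I_n -> R)).

Local Notation X := (Xn R n).
Local Notation P := (Pn R n).
Local Notation L := (Ln R n).
Local Notation op := (tauA_open A).

Lemma partC_fwd : t_sigma_compact X op ->
  t_Fsigma L (@eopenL R n) A /\ countable (L `\` A).
Proof.
move=> [K [hK XK]].
split.
- exists (fun i => K i `&` A); split.
  + move=> i; split; first by move=> x [_ /hA].
    split; first by move=> x [].
    move=> a [La nC].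
    have [KX cK] := hK i.
    case: (pselect (K i a)) => [Ka|nKa].
    * have nAa : ~ A a by move=> Aa; apply: nC.
      have [e [e0 he]] := compact_near hn KX cK (PUb_open hn hA La nAa) (fun _ => or_intror erefl).
      exists e; split => // y [hy Ly]; split => // -[Ky Ay].
      case: (he y Ky hy) => [Py|ya]; first exact: (PL_false Py Ly).
      by apply: nAa; rewrite -ya.
    * have [e [e0 he]] := compact_near hn KX cK (op0 A) (fun Ka => nKa Ka).
      exists e; split => // y [hy Ly]; split => // -[Ky _]; exact: he y Ky hy.
  + apply/seteqP; split.
    * move=> a Aa; have : X a by right; apply: hA.
      by rewrite XK => -[i _ Kia]; exists i.
    * by move=> a [i _ []].
- have -> : L `\` A = \bigcup_i (K i `&` (L `\` A)).
    apply/seteqP; split; last by move=> x [i _ []].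
    move=> x [Lx nAx]; have : X x by right.
    by rewrite XK => -[i _ Kx]; exists i.
  apply: bigcup_countable => // i _.
  have [KX cK] := hK i.
  have [f hf] : {f : ('I_n -> R) -> Qt n & forall b, (K i `&` (L `\` A)) b ->
      eball (gc R (f b)) (gr R (f b)) b /\
      forall x, K i x -> eball (gc R (f b)) (gr R (f b)) x -> P x \/ x = b}.
    apply: (@choice _ _ (fun b (q : Qt n) => (K i `&` (L `\` A)) b ->
      eball (gc R q) (gr R q) b /\
      forall x, K i x -> eball (gc R q) (gr R q) x -> P x \/ x = b)) => b.
    case: (pselect ((K i `&` (L `\` A)) b)) => [[Kb [Lb nAb]]|nS]; last first.
      by exists ([ffun=> 0%R], 0%N).
    have [e [e0 he]] := compact_near hn KX cK (PUb_open hn hA Lb nAb) (fun _ => or_intror erefl).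
    have [q [hq1 hq2]] := grid b e0.
    exists q => _; split; first exact: hq1.
    move=> x Kx hx; case: (he x Kx (hq2 x hx)) => [Px|xb]; [by left|by right].
  apply/countable_injP; exists (fun b => pickle (f b)) => b1 b2 hb1 hb2 heq.
  have e12 : f b1 = f b2 by apply: (pcan_inj pickleK).
  have /set_mem [Kb1 [Lb1 _]] := hb1.
  have /set_mem S2 := hb2; have [Kb2 [Lb2 _]] := S2.
  have [_ h1] := hf b1 (set_mem hb1); have [h2 _] := hf b2 S2.
  rewrite -e12 in h2.
  case: (h1 b2 Kb2 h2) => [Pb2|->] //; exfalso; exact: (PL_false Pb2 Lb2).
Qed.

End PartC.

Section PartC2.
Variables (R : realType) (n : nat).
Hypothesis hn : (0 < n)%N.
Variable A : set ('I_n -> R).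
Hypothesis hA : A `<=` Ln R n.
Implicit Types (x y z a b p : 'I_n -> R) (e : R) (U V S K : set ('I_n -> R)).

Local Notation X := (Xn R n).
Local Notation P := (Pn R n).
Local Notation L := (Ln R n).
Local Notation op := (tauA_open A).

Lemma eclosedI S1 S2 : eclosed S1 -> eclosed S2 -> eclosed (S1 `&` S2).
Proof.
move=> h1 h2 x nS.
case: (pselect (S1 x)) => [S1x|nS1]; last first.
  by have [e [e0 he]] := h1 x nS1; exists e; split => // y hy [S1y _]; exact: he y hy S1y.
case: (pselect (S2 x)) => [S2x|nS2]; first by case: nS.
by have [e [e0 he]] := h2 x nS2; exists e; split => // y hy [_ S2y]; exact: he y hy S2y.
Qed.

Lemma eclosed_box (m : R) : eclosed [set x : 'I_n -> R | forall j, `|x j| <= m].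
Proof.
move=> x nb.
have [j hj] : exists j, ~ (`|x j| <= m).
  by apply: contrapT => hno; apply: nb => j; apply: contrapT => h; apply: hno; exists j.
have hj' : m < `|x j| by rewrite ltNge; apply/negP.
exists (`|x j| - m); split; first by rewrite subr_gt0.
move=> y hy hb; have := hb j.
have := coord_le x y j; rewrite edist_sym.
have := ler_normD (y j) (x j - y j); rewrite addrC subrK.
lra.
Qed.

Lemma eclosed_ge (d : R) : eclosed [set x : 'I_n -> R | d <= lastc x].
Proof.
move=> x nd.
have hd : lastc x < d by rewrite ltNge; apply/negP.
exists (d - lastc x); split; first by rewrite subr_gt0.
move=> y hy hy2; have hy2' : d <= lastc y := hy2.
have [_ h2] := lastc_bounds hn y x; lra.
Qed.

Lemma eclosed_Lclosed C : t_closed L (@eopenL R n) C -> eclosed C.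
Proof.
move=> [CL [_ hC]] x nCx.
case: (pselect (L x)) => [Lx|nLx].
  have [e [e0 he]] := hC x (conj Lx nCx).
  exists e; split => // y hy Cy.
  by have [_] := he y (conj hy (CL y Cy)).
have hx : 0 < `|lastc x|.
  by rewrite normr_gt0; apply/eqP => h; apply: nLx.
exists `|lastc x|; split => // y hy /CL Ly.
have := coord_il_le hn y x; rewrite (Ly : lastc y = 0) sub0r normrN; lra.
Qed.

Lemma compactU K1 K2 : t_compact op K1 -> t_compact op K2 -> t_compact op (K1 `|` K2).
Proof.
move=> c1 c2 I U Uo cov.
have [J1 [f1 h1]] := c1 I U Uo (fun x hx => cov x (or_introl hx)).
have [J2 [f2 h2]] := c2 I U Uo (fun x hx => cov x (or_intror hx)).
exists (J1 `|` J2); split; first by rewrite finite_setU.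
move=> x [/h1|/h2] [i Ji Ui]; exists i => //; [left|right] => //.
Qed.

Lemma compact_sub1 S : (forall x y, S x -> S y -> x = y) -> t_compact op S.
Proof.
move=> hS I U Uo cov.
case: (pselect (exists x, S x)) => [[x Sx]|nS]; last first.
  exists set0; split; first exact: finite_set0.
  by move=> x Sx; case: nS; exists x.
have [i _ Ui] := cov x Sx.
exists [set i]; split; first exact: finite_set1.
by move=> y Sy; exists i => //; rewrite (hS y x Sy Sx).
Qed.

Lemma abs_le_sum x j : `|x j| <= \sum_k `|x k|.
Proof. by rewrite (bigD1 j) //= lerDl; apply: sumr_ge0. Qed.

Lemma partC_bwd : t_Fsigma L (@eopenL R n) A /\ countable (L `\` A) ->
  t_sigma_compact X op.
Proof.
move=> [[C [Cc AC]] /countable_injP [h0 hh0]].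
have CA i : C i `<=` A by move=> x Cx; rewrite AC; exists i.
pose box (m : nat) := [set x : 'I_n -> R | forall j, `|x j| <= m%:R].
pose Kc (i m : nat) := C i `&` box m.
pose Kp (m : nat) := [set x | m.+1%:R^-1 <= lastc x] `&` box m.
pose Ks (i : nat) := [set x | L x /\ ~ A x /\ h0 x = i].
pose K (j : nat) := match @unpickle (nat * nat)%type j with
  | Some (i, m) => Kc i m `|` Kp m `|` Ks i
  | None => set0 end.
have KpP m x : Kp m x -> P x.
  move=> [hx _]; apply: (lt_le_trans _ hx); by rewrite invr_gt0 ltr0n.
have KX j : K j `<=` X.
  rewrite /K; case: unpickle => [[i m]|] //.
  move=> x [[[/CA/hA Lx _]|/KpP Px]|[Lx _]]; by [right|left|right].
exists K; split.
  move=> j; split; first exact: KX.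
  rewrite /K; case: unpickle => [[i m]|]; last first.
    by move=> I U _ _; exists set0; split; [exact: finite_set0|].
  apply: compactU; first apply: compactU.
  - apply: (compact_transfer (m := m%:R)).
    + by move=> x [/CA/hA Lx _]; right.
    + by move=> x [/CA Ax _]; right.
    + apply: eclosedI; [exact: eclosed_Lclosed|exact: eclosed_box].
    + by move=> x [_ hb].
  - apply: (compact_transfer (m := m%:R)).
    + by move=> x /KpP Px; left.
    + by move=> x /KpP Px; left.
    + apply: eclosedI; [exact: eclosed_ge|exact: eclosed_box].
    + by move=> x [_ hb].
  - apply: compact_sub1 => x y [Lx [nAx hx]] [Ly [nAy hy]].
    apply: hh0; [by apply/mem_set|by apply/mem_set|by rewrite hx hy].
apply/seteqP; split; last by move=> x [j _ /KX].
move=> x Xx.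
set M := \sum_k `|x k|.
have M0 : 0 <= M by apply: sumr_ge0.
pose m1 := Num.Def.archi_bound M.
have hm1 j : `|x j| <= m1%:R.
  by apply: (le_trans (abs_le_sum x j)); apply: ltW; apply: archi_boundP.
case: (pselect (P x)) => [Px|nPx].
  have [k hk] := small_inv (lastc_pos Px).
  exists (pickle (0%N, maxn m1 k)) => //.
  rewrite /K pickleK; left; right; split.
    apply: (le_trans _ (ltW hk)); apply: inv_nat_le; exact: leq_maxr.
  move=> j; apply: (le_trans (hm1 j)); rewrite ler_nat; exact: leq_maxl.
have Lx : L x by case: Xx.
case: (pselect (A x)) => [Ax|nAx].
  have : (\bigcup_i C i) x by rewrite -AC.
  move=> [i _ Cix].
  exists (pickle (i, m1)) => //.
  by rewrite /K pickleK; left; left; split.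
exists (pickle (h0 x, 0%N)) => //.
by rewrite /K pickleK; right.
Qed.

End PartC2.

Local Close Scope ring_scope.
Unset Implicit Arguments.

Theorem mainTheorem5 (R : realType) (n : nat) (A : set ('I_n -> R)) :
  (2 <= n)%N -> A `<=` Ln R n ->
  (t_perfect (Xn R n) (tauA_open A) <-> t_Gdelta (@eopenL R n) A) /\
  (t_lindelof (Xn R n) (tauA_open A) <->
     ~ exists F : set ('I_n -> R),
         F `<=` Ln R n `\` A /\ t_closed (Ln R n) (@eopenL R n) F /\ ~ countable F) /\
  (t_sigma_compact (Xn R n) (tauA_open A) <->
     t_Fsigma (Ln R n) (@eopenL R n) A /\ countable (Ln R n `\` A)).
Proof.
move=> h2 hA; have hn : (0 < n)%N by apply: leq_trans h2.
split; [|split].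
- split; [exact: (@partA_fwd R n hn A hA)|exact: (@partA_bwd R n hn A)].
- split; [exact: (@partB_fwd R n hn A hA)|exact: (@partB_bwd R n hn A)].
- split; [exact: (@partC_fwd R n hn A hA)|exact: (@partC_bwd R n hn A hA)].
Qed.
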